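(* Let $\mathbb K$ be algebraically closed of characteristic zero, $T$ a torus with Lie algebra $\mathfrak t$, $V$ a finite-dimensional $T$-module, and $\mu:V\oplus V^*\to\mathfrak t^*$, $\mu(x,y)(\xi)=y(\xi\cdot x)$. If $(x,y)\in\mu^{-1}(0)$ is such that $T\cdot x$ is closed in $V$ and $T\cdot y$ is closed in $V^*$, then $T\cdot(x,y)$ is closed in $V\oplus V^*$. *)

(* Defs.v *)
From mathcomp Require Import all_boot all_algebra.
From mathcomp Require Import mpoly.
Set Implicit Arguments. Unset Strict Implicit. Unset Printing Implicit Defensive.
Import GRing.Theory.
Local Open Scope ring_scope.

Definition torus_pt (K : fieldType) (r : nat) (t : 'I_r -> K) : Prop :=
  forall k, t k != 0.

Definition char_val (K : fieldType) (r : nat) (chi : 'I_r -> int) (t : 'I_r -> K) : K :=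
  \prod_(k < r) (t k) ^ (chi k).

(* A rational (algebraic) map T -> 'M_n: entries lie in K[T] = span of the
   characters, i.e. rho(t) = sum_j t^(c j) A_j. *)
Definition rep_mx (K : fieldType) (r m n : nat) (c : 'I_m -> 'I_r -> int)
  (A : 'I_m -> 'M[K]_n) (t : 'I_r -> K) : 'M[K]_n :=
  \sum_(j < m) char_val (c j) t *: A j.

Definition is_rational_rep (K : fieldType) (r m n : nat) (c : 'I_m -> 'I_r -> int)
  (A : 'I_m -> 'M[K]_n) : Prop :=
  rep_mx c A (fun _ => 1) = 1%:M /\
  forall s t, torus_pt s -> torus_pt t ->
    rep_mx c A (fun k => s k * t k) = rep_mx c A s *m rep_mx c A t.

(* Differential of rho at the identity: the action of xi in t = K^r
   (d/d eps of t^chi at 1 in direction xi is sum_k chi_k xi_k). *)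
Definition lie_act (K : fieldType) (r m n : nat) (c : 'I_m -> 'I_r -> int)
  (A : 'I_m -> 'M[K]_n) (xi : 'I_r -> K) : 'M[K]_n :=
  \sum_(j < m) (\sum_(k < r) (c j k)%:~R * xi k) *: A j.

Definition moment_map (K : fieldType) (r m n : nat) (c : 'I_m -> 'I_r -> int)
  (A : 'I_m -> 'M[K]_n) (x : 'cV[K]_n) (y : 'rV[K]_n) (xi : 'I_r -> K) : K :=
  (y *m lie_act c A xi *m x) 0 0.

Definition zariski_closed (K : fieldType) (N : nat) (S : ('I_N -> K) -> Prop) : Prop :=
  exists P : {mpoly K[N]} -> Prop,
    forall v, S v <-> (forall p, P p -> p.@[v] = 0).

Definition orbit_V (K : fieldType) (r m n : nat) (c : 'I_m -> 'I_r -> int)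
  (A : 'I_m -> 'M[K]_n) (x : 'cV[K]_n) : ('I_n -> K) -> Prop :=
  fun v => exists t, torus_pt t /\ forall i, v i = (rep_mx c A t *m x) i 0.

(* Orbit T.y in V^* for the contragredient action (t.y)(v) = y(t^-1 v). *)
Definition orbit_Vdual (K : fieldType) (r m n : nat) (c : 'I_m -> 'I_r -> int)
  (A : 'I_m -> 'M[K]_n) (y : 'rV[K]_n) : ('I_n -> K) -> Prop :=
  fun v => exists t, torus_pt t /\
    forall i, v i = (y *m rep_mx c A (fun k => (t k)^-1)) 0 i.

Definition orbit_VVdual (K : fieldType) (r m n : nat) (c : 'I_m -> 'I_r -> int)
  (A : 'I_m -> 'M[K]_n) (x : 'cV[K]_n) (y : 'rV[K]_n) : ('I_(n + n) -> K) -> Prop :=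
  fun v => exists t, torus_pt t /\
    (forall i, v (lshift n i) = (rep_mx c A t *m x) i 0) /\
    (forall i, v (rshift n i) = (y *m rep_mx c A (fun k => (t k)^-1)) 0 i).

(* Main.v *)
Require Import Defs.
From mathcomp Require Import all_boot all_algebra.
From mathcomp Require Import mpoly.
From mathcomp Require Import zify.
Set Implicit Arguments. Unset Strict Implicit. Unset Printing Implicit Defensive.
Import GRing.Theory Num.Theory.
Local Open Scope ring_scope.


Section CharVal.
Variable K : fieldType.
Variable r : nat.
Implicit Types (t s : 'I_r -> K) (a b : 'I_r -> int).

Lemma char_val_neq0 a t : torus_pt t -> char_val a t != 0.
Proof.
move=> ht; rewrite /char_val; apply/prodf_neq0 => k _; exact: expfz_neq0.
Qed.

Lemma char_valM a s t :
  char_val a (fun k => s k * t k) = char_val a s * char_val a t.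
Proof. by rewrite /char_val -big_split /=; apply: eq_bigr => k _; rewrite expfzMl. Qed.

Lemma char_valV a t : char_val a (fun k => (t k)^-1) = (char_val a t)^-1.
Proof.
rewrite /char_val -prodfV; apply: eq_bigr => k _; by rewrite expfV.
Qed.

Lemma char_valD a b t : torus_pt t ->
  char_val (fun k => a k + b k) t = char_val a t * char_val b t.
Proof.
move=> ht; rewrite /char_val -big_split /=; apply: eq_bigr => k _.
by rewrite expfzDr.
Qed.

Lemma char_valN a t : char_val (fun k => - a k) t = char_val a (fun k => (t k)^-1).
Proof. by rewrite /char_val; apply: eq_bigr => k _; rewrite exprz_inv. Qed.

Lemma char_val_ext a b t : a =1 b -> char_val a t = char_val b t.
Proof. by move=> e; rewrite /char_val; apply: eq_bigr => k _; rewrite e. Qed.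

Lemma char_val0 t : char_val (fun _ => 0) t = 1.
Proof. by rewrite /char_val big1 // => k _; rewrite expr0z. Qed.

Lemma char_val_sum (I : finType) (P : pred I) (mu : I -> nat) (w : I -> 'I_r -> int) t :
  torus_pt t ->
  char_val (fun k => \sum_(i | P i) (mu i)%:Z * w i k) t =
  \prod_(i | P i) (char_val (w i) t) ^+ mu i.
Proof.
move=> ht; rewrite /char_val.
transitivity (\prod_(k < r) \prod_(i | P i) t k ^ ((mu i)%:Z * w i k)).
  apply: eq_bigr => k _.
  by rewrite (big_morph (fun z : int => t k ^ z) (fun u v => expfzDr u v (ht k)) (expr0z _)).
rewrite exchange_big /=; apply: eq_bigr => i _.
rewrite -prodrXl; apply: eq_bigr => k _.
by rewrite mulrC -exprz_exp. 
Qed.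

End CharVal.


Section Solve.
Variable K : closedFieldType.

Lemma int_root (d : int) (a : K) : d != 0 -> a != 0 ->
  exists u : K, u != 0 /\ u ^ d = a.
Proof.
move=> dn0 an0.
have n0 : (0 < `|d|)%N by rewrite absz_gt0.
set b := if (0 <= d) then a else a^-1.
have bn0 : b != 0 by rewrite /b; case: ifP => _; rewrite ?invr_eq0.
have [z hz] := @solve_monicpoly K `|d|%N (fun i => if i == 0%N then b else 0) n0.
have hz' : z ^+ `|d|%N = b.
  rewrite hz (bigD1 (Ordinal n0)) //= big1 ?addr0 ?expr0 ?mulr1 //.
  move=> i /negPf; rewrite -val_eqE /= => ->; by rewrite mul0r.
have zn0 : z != 0.
  apply/negP => /eqP z0; move: hz'; rewrite z0 expr0n; case: `|d|%N n0 => // n' _ /= e.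
  by move: bn0; rewrite -e eqxx.
exists z; split => //.
clear hz; move: hz'; rewrite /b; case: (intP d) => [|k|k] //=.
move=> e; rewrite -invr_expz.
have -> : z ^ (k.+1 : int) = z ^+ k.+1 by [].
by rewrite e invrK.
Qed.

Definition mact p q (Q : 'M[int]_(p, q)) (u : 'I_q -> K) : 'I_p -> K :=
  fun i => \prod_k u k ^ Q i k.

Lemma mact_torus p q (Q : 'M[int]_(p, q)) u : torus_pt u -> torus_pt (mact Q u).
Proof. move=> hu i; apply/prodf_neq0 => k _; exact: expfz_neq0. Qed.

Lemma mact_ext p q (Q : 'M[int]_(p, q)) u v : u =1 v -> mact Q u =1 mact Q v.
Proof. by move=> e i; apply: eq_bigr => k _; rewrite e. Qed.

Lemma mactM p q l (Q1 : 'M[int]_(p, q)) (Q2 : 'M[int]_(q, l)) u :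
  torus_pt u -> mact (Q1 *m Q2) u =1 mact Q1 (mact Q2 u).
Proof.
move=> hu i; rewrite /mact.
transitivity (\prod_j \prod_k u k ^ (Q2 j k * Q1 i j)); last first.
  apply: eq_bigr => j _.
  by rewrite (big_morph (fun a : K => a ^ Q1 i j) (fun a b => expfzMl a b _) (exp1rz _ _)); apply: eq_bigr => k _; rewrite exprz_exp.
rewrite exchange_big /=; apply: eq_bigr => k _.
rewrite mxE (big_morph (fun z : int => u k ^ z) (fun a b => expfzDr a b (hu k)) (expr0z _)).
by apply: eq_bigr => j _; rewrite mulrC.
Qed.

Lemma mact1 q u : mact (1%:M : 'M[int]_q) u =1 u.
Proof.
move=> i; rewrite /mact (bigD1 i) //= big1 ?mulr1.
  by rewrite mxE eqxx.
by move=> k /negPf hk; rewrite mxE eq_sym hk expr0z.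
Qed.

Lemma solve_core r N (w : 'I_N -> 'I_r -> int) (cv : 'I_N -> K) :
  (forall i, cv i != 0) ->
  (forall mu : 'I_N -> int, (forall k, \sum_i mu i * w i k = 0) ->
       \prod_i cv i ^ mu i = 1) ->
  exists t, torus_pt t /\ forall i, char_val (w i) t = cv i.
Proof.
move=> hcv hrel.
pose M : 'M[int]_(N, r) := \matrix_(i, k) w i k.
have [L uL [R uR [d _ hM]]] := int_Smith_normal_form M.
set D := \matrix_(i, j) _ in hM.
pose c' := mact (invmx L) cv.
have row0 : forall i, (forall k, D i k = 0) -> c' i = 1.
  move=> i h; apply: hrel => k.
  have : (invmx L *m M) i k = (D *m R) i k by rewrite hM -!mulmxA mulKmx.
  move=> e; have e2 : (D *m R) i k = 0 by rewrite mxE big1 // => j _; rewrite h mul0r.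
  transitivity ((invmx L *m M) i k); last by rewrite e e2.
  by rewrite mxE; apply: eq_bigr => j _; rewrite [M _ _]mxE.
have roots : forall k : 'I_r, exists uk : K, uk != 0 /\
    forall i : 'I_N, (i : nat) = k -> uk ^ d`_i = c' i.
  move=> k; case: (ltnP k N) => [kN|kN].
    case: (d`_k =P 0) => dk.
      exists 1; split; first exact: oner_neq0.
      move=> i ei; rewrite exp1rz; symmetry; apply: row0 => k'.
      by rewrite /D mxE ei dk mul0rn.
    have [z [zn0 hz]] := @int_root (d`_k) (c' (Ordinal kN)) (introN eqP dk) (mact_torus (invmx L) hcv _).
    exists z; split => // i ei.
    have -> : i = Ordinal kN by apply: val_inj.
    by rewrite /= hz.
  exists 1; split; first exact: oner_neq0.
  move=> i ei; have := ltn_ord i; rewrite ei => /leq_trans /(_ kN); by rewrite ltnn.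
have [u hu] := fin_all_exists roots.
have tu : torus_pt u by move=> k; case: (hu k).
have hDu : mact D u =1 c'.
  move=> i; rewrite /mact; case: (ltnP i r) => ir.
    rewrite (bigD1 (Ordinal ir)) //= big1 ?mulr1.
      by rewrite /D mxE eqxx mulr1n; apply: (proj2 (hu _)).
    move=> k /negPf hk; rewrite /D mxE.
    have -> : ((i : nat) == k) = false.
      by apply/negbTE; apply: contraFN hk => /eqP e; apply/eqP/val_inj.
    by rewrite mulr0n expr0z.
  rewrite big1; first by symmetry; apply: row0 => k; rewrite /D mxE;
    have -> : ((i : nat) == k) = false by apply/negbTE; rewrite neq_ltn (leq_trans (ltn_ord k) ir) orbT.
  move=> k _; rewrite /D mxE.
  have -> : ((i : nat) == k) = false by apply/negbTE; rewrite neq_ltn (leq_trans (ltn_ord k) ir) orbT.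
  by rewrite mulr0n expr0z.
pose t := mact (invmx R) u.
have tt : torus_pt t by apply: mact_torus.
exists t; split => // i.
have -> : char_val (w i) t = mact M t i.
  by rewrite /char_val /mact; apply: eq_bigr => k _; rewrite mxE.
rewrite hM mactM ?mactM //; last by apply: mact_torus; apply: mact_torus.
have e1 : mact R t =1 u by move=> k; rewrite /t -mactM // mulmxV // mact1.
rewrite (mact_ext L (mact_ext D e1)) (mact_ext L hDu) /c' -mactM // mulmxV // mact1 //.
Qed.

End Solve.


Section SolveGen.
Variable K : closedFieldType.

Lemma solve_gen r N (P : pred 'I_N) (w : 'I_N -> 'I_r -> int) (cv : 'I_N -> K) :
  (forall i, P i -> cv i != 0) ->
  (forall mp mn : 'I_N -> nat, (forall i, ~~ P i -> mp i = 0%N /\ mn i = 0%N) ->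
     (forall k, \sum_i (mp i)%:Z * w i k = \sum_i (mn i)%:Z * w i k) ->
     \prod_i cv i ^+ mp i = \prod_i cv i ^+ mn i) ->
  exists t, torus_pt t /\ forall i, P i -> char_val (w i) t = cv i.
Proof.
move=> hcv hrel.
pose w' i := if P i then w i else (fun _ => 0).
pose cv' i := if P i then cv i else 1.
have hcv' : forall i, cv' i != 0.
  move=> i; rewrite /cv'; case Pi: (P i); [exact: hcv | exact: oner_neq0].
have hrel' : forall mu : 'I_N -> int, (forall k, \sum_i mu i * w' i k = 0) ->
       \prod_i cv' i ^ mu i = 1.
  move=> mu hmu.
  pose mp i := if P i then (match mu i with Posz n => n | Negz _ => 0%N end) else 0%N.
  pose mn i := if P i then (match mu i with Posz _ => 0%N | Negz n => n.+1 end) else 0%N.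
  have hsupp : forall i, ~~ P i -> mp i = 0%N /\ mn i = 0%N.
    by move=> i /negPf Pi; rewrite /mp /mn Pi.
  have hdiff : forall i, (mp i)%:Z - (mn i)%:Z = if P i then mu i else 0.
    move=> i; rewrite /mp /mn; case: (P i) => //; case: (mu i) => n.
      by rewrite subr0.
    by rewrite NegzE sub0r.
  have key : forall i, cv' i ^ mu i = cv i ^+ mp i * (cv i ^+ mn i)^-1.
    move=> i; rewrite /cv' /mp /mn; case: (P i); last by rewrite exp1rz expr0 invr1 mulr1.
    by case: (mu i) => n /=; rewrite ?expr0 ?invr1 ?mulr1 ?mul1r.
  have hsum : forall k, \sum_i (mp i)%:Z * w i k = \sum_i (mn i)%:Z * w i k.
    move=> k; apply/eqP; rewrite -subr_eq0 -sumrB; apply/eqP.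
    transitivity (\sum_i mu i * w' i k); last exact: hmu k.
    apply: eq_bigr => i _.
    rewrite -mulrBl hdiff /w'; by case: (P i); rewrite ?mul0r ?mulr0.
  have e := hrel mp mn hsupp hsum.
  under eq_bigr => i _ do rewrite key.
  rewrite big_split /= prodfV e divff //.
  apply/prodf_neq0 => i _.
  case Pi: (P i); first by apply: expf_neq0; apply: hcv.
  by rewrite (proj2 (hsupp i _)) ?Pi // expr0 oner_neq0.
have [t [tt ht]] := @solve_core K r N w' cv' hcv' hrel'.
exists t; split => // i Pi.
  by move: (ht i); rewrite /w' /cv' Pi.
Qed.

End SolveGen.


Lemma digits0 (b : int) r (d : 'I_r -> int) : 0 < b ->
  (forall k, - b < d k < b) -> \sum_k d k * b ^+ k = 0 -> forall k, d k = 0.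
Proof.
move=> b0; elim: r d => [|r IH] d hd hs k; first by case: k.
move: hs; rewrite big_ord_recl /= expr0 mulr1.
have -> : \sum_(i < r) d (lift ord0 i) * b ^+ bump 0 i =
          b * \sum_(i < r) d (lift ord0 i) * b ^+ i.
  rewrite mulr_sumr; apply: eq_bigr => i _; rewrite /bump /= add1n exprS.
  by rewrite mulrCA.
set S := \sum_(i < r) _ => hs.
have hd0 := hd ord0.
have S0 : S = 0.
  move: hd0 hs b0; clear; move: (d ord0) => x. nia.
have d00 : d ord0 = 0 by move: hs; rewrite S0 mulr0 addr0.
have := IH (fun i => d (lift ord0 i)) (fun i => hd _) S0.
by case: (unliftP ord0 k) => [k' ->|->] // /(_ k').
Qed.

Section Indep.
Variable K : fieldType.
Hypothesis hchar : [pchar K] =i pred0.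

Lemma natr_inj_char0 i j : (i%:R : K) = j%:R -> i = j.
Proof.
have h := proj1 (pcharf0P K) hchar.
wlog le_ij : i j / (i <= j)%N.
  move=> H e; case: (leqP i j) => [/H -> //|/ltnW/H]; by move=> /(_ (esym e)).
move=> e; apply/eqP; rewrite eqn_leq le_ij /=.
have : ((j - i)%N%:R : K) == 0 by rewrite natrB // e subrr.
by rewrite h subn_eq0.
Qed.

Lemma poly_eq0_roots (p : {poly K}) : (forall z, z != 0 -> p.[z] = 0) -> p = 0.
Proof.
move=> hz; apply/eqP/negPn/negP => pn0.
pose rs := [seq (i.+1)%:R : K | i <- iota 0 (size p)].
suff : (size rs < size p)%N by rewrite size_map size_iota ltnn.
apply: max_poly_roots => //.
  apply/allP => z /mapP [i _ ->]; apply/rootP/hz.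
  by rewrite (proj1 (pcharf0P K) hchar).
rewrite map_inj_uniq ?iota_uniq // => i j /natr_inj_char0; by case.
Qed.

Lemma laurent_indep m (e : 'I_m -> int) (a : 'I_m -> K) :
  (forall z, z != 0 -> \sum_j a j * z ^ e j = 0) ->
  forall e0, \sum_(j | e j == e0) a j = 0.
Proof.
move=> hz e0.
pose E := (\sum_j `|e j|)%N.
have hE : forall j, 0 <= e j + E%:Z.
  move=> j; have : (`|e j| <= E)%N by rewrite /E (bigD1 j) //= leq_addr.
  lia.
pose f j := absz (e j + E%:Z).
have hf : forall j, (f j)%:Z = e j + E%:Z by move=> j; rewrite /f; apply: gez0_abs.
pose p : {poly K} := \sum_j a j *: 'X^(f j).
have p0 : p = 0.
  apply: poly_eq0_roots => z z0.
  rewrite /p horner_sum.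
  transitivity (z ^+ E * \sum_j a j * z ^ e j); last by rewrite hz // mulr0.
  rewrite mulr_sumr; apply: eq_bigr => j _.
  rewrite hornerZ hornerXn mulrCA; congr (_ * _).
  have -> : z ^+ f j = z ^ (f j)%:Z by [].
  by rewrite hf expfzDr // mulrC.
case: (pickP (fun j => e j == e0)) => [j0 /eqP hj0|none]; last first.
  by rewrite big_pred0.
have := congr1 (fun q : {poly K} => q`_(f j0)) p0.
rewrite coef0 /p coef_sum => H.
suff -> : \sum_(j | e j == e0) a j = \sum_i (a i *: 'X^(f i))`_(f j0) by [].
rewrite [RHS](bigID (fun j => e j == e0)) /= [X in _ + X]big1 ?addr0.
  apply: eq_big => [j //|j /eqP hj].
  have -> : f j = f j0 by rewrite /f hj hj0.
  by rewrite coefZ coefXn eqxx mulr1.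
move=> j hj; rewrite coefZ coefXn.
have -> : (f j0 == f j) = false.
  apply/negbTE; apply: contra hj => /eqP h; apply/eqP; symmetry in h.
  by have := congr1 (fun n : nat => n%:Z) h; rewrite !hf hj0 => /addIr.
by rewrite mulr0.
Qed.

End Indep.

Definition ceq r m (c : 'I_m -> 'I_r -> int) j j0 := [forall k, c j k == c j0 k].

Section Indep2.
Variable K : fieldType.
Hypothesis hchar : [pchar K] =i pred0.

Lemma char_indep r m (c : 'I_m -> 'I_r -> int) (a : 'I_m -> K) :
  (forall s, torus_pt s -> \sum_j a j * char_val (c j) s = 0) ->
  forall j0, \sum_(j | ceq c j j0) a j = 0.
Proof.
move=> hs j0.
pose Bn := (\sum_j \sum_k `|c j k|)%N.
pose b : int := (2 * Bn + 1)%N%:Z.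
have hB : forall j k, (`|c j k| <= Bn)%N.
  by move=> j k; rewrite /Bn (bigD1 j) //= (bigD1 k) //= -addnA leq_addr.
pose e j := \sum_k c j k * b ^+ k.
have he : forall j, (e j == e j0) = ceq c j j0.
  move=> j; apply/eqP/forallP => [h k | h].
  - apply/eqP; apply/eqP; rewrite -subr_eq0; apply/eqP.
    apply: (@digits0 b r (fun k => c j k - c j0 k)).
    + rewrite /b; lia.
    + move=> k'; have := hB j k'; have := hB j0 k'; rewrite /b; lia.
    rewrite (eq_bigr (fun k => c j k * b^+k - c j0 k * b^+k)); last by move=> k' _; rewrite mulrBl.
    by rewrite sumrB; move: h; rewrite /e => ->; rewrite subrr.
  - rewrite /e; apply: eq_bigr => k _; by rewrite (eqP (h k)).
have hz : forall z, z != 0 -> \sum_j a j * z ^ e j = 0.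
  move=> z z0; transitivity (\sum_j a j * char_val (c j) (fun k => z ^ (b ^+ k))).
  - apply: eq_bigr => j _; congr (_ * _).
    rewrite /char_val /e.
    rewrite (big_morph (fun u : int => z ^ u) (fun u v => expfzDr u v z0) (expr0z _)).
    apply: eq_bigr => k _; by rewrite exprz_exp mulrC.
  - by apply: hs => k; apply: expfz_neq0.
have := laurent_indep hchar hz (e j0).
by under eq_bigl => j do rewrite he.
Qed.

Lemma char_indep_mx r m p q (c : 'I_m -> 'I_r -> int) (M : 'I_m -> 'M[K]_(p, q)) :
  (forall s, torus_pt s -> \sum_j char_val (c j) s *: M j = 0) ->
  forall j0, \sum_(j | ceq c j j0) M j = 0.
Proof.
move=> hs j0; apply/matrixP => i k; rewrite summxE mxE.
apply: (char_indep (a := fun j => M j i k)) => s ts.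
have := congr1 (fun N : 'M[K]_(p, q) => N i k) (hs s ts).
rewrite summxE mxE => H; rewrite -[RHS]H; apply: eq_bigr => j _; by rewrite mxE mulrC.
Qed.

End Indep2.


Section Rep.
Variable K : fieldType.
Hypothesis hchar : [pchar K] =i pred0.
Variables (r m n : nat) (c : 'I_m -> 'I_r -> int) (A : 'I_m -> 'M[K]_n).
Hypothesis hrep : is_rational_rep c A.

Local Notation rho := (rep_mx c A).

Definition Bm j0 := \sum_(j | ceq c j j0) A j.

Lemma ceq_refl j : ceq c j j. Proof. by apply/forallP => k. Qed.
Lemma ceq_sym j j' : ceq c j j' = ceq c j' j.
Proof. by apply/forallP/forallP => h k; rewrite eq_sym h. Qed.
Lemma ceq_trans j1 j2 j3 : ceq c j1 j2 -> ceq c j2 j3 -> ceq c j1 j3.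
Proof. by move=> /forallP h1 /forallP h2; apply/forallP => k; rewrite (eqP (h1 k)) h2. Qed.
Lemma char_val_ceq j j0 (t : 'I_r -> K) : ceq c j j0 -> char_val (c j) t = char_val (c j0) t.
Proof. by move=> /forallP h; apply: char_val_ext => k; apply/eqP. Qed.

Lemma rhoM s t : torus_pt s -> torus_pt t ->
  \sum_j char_val (c j) s *: (A j *m rho t - char_val (c j) t *: A j) = 0.
Proof.
move=> ts tt; rewrite (eq_bigr (fun j => char_val (c j) s *: (A j *m rho t) -
     char_val (c j) (fun k => s k * t k) *: A j)); last first.
  by move=> j _; rewrite scalerBr char_valM scalerA.
rewrite sumrB.
have -> : \sum_j char_val (c j) (fun k => s k * t k) *: A j = rho (fun k => s k * t k) by [].
rewrite (proj2 hrep s t ts tt) [rep_mx c A s]/rep_mx (mulmx_suml (rho t)).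
by apply/eqP; rewrite subr_eq0; apply/eqP; apply: eq_bigr => j _; rewrite scalemxAl.
Qed.

Lemma rhoM' s t : torus_pt s -> torus_pt t ->
  \sum_j char_val (c j) t *: (rho s *m A j - char_val (c j) s *: A j) = 0.
Proof.
move=> ts tt; rewrite (eq_bigr (fun j => char_val (c j) t *: (rho s *m A j) -
     char_val (c j) (fun k => s k * t k) *: A j)); last first.
  by move=> j _; rewrite scalerBr char_valM scalerA mulrC.
rewrite sumrB.
have -> : \sum_j char_val (c j) (fun k => s k * t k) *: A j = rho (fun k => s k * t k) by [].
rewrite (proj2 hrep s t ts tt) [rep_mx c A t]/rep_mx (mulmx_sumr (rho s)).
by apply/eqP; rewrite subr_eq0; apply/eqP; apply: eq_bigr => j _; rewrite scalemxAr.
Qed.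

Lemma B_rho j0 t : torus_pt t -> Bm j0 *m rho t = char_val (c j0) t *: Bm j0.
Proof.
move=> tt.
have := char_indep_mx hchar (M := fun j => A j *m rho t - char_val (c j) t *: A j) (fun s ts => rhoM ts tt) j0.
rewrite sumrB => /eqP; rewrite subr_eq0 => /eqP e.
rewrite /Bm mulmx_suml e scaler_sumr; apply: eq_bigr => j hj.
by rewrite (char_val_ceq _ hj).
Qed.

Lemma rho_B j0 s : torus_pt s -> rho s *m Bm j0 = char_val (c j0) s *: Bm j0.
Proof.
move=> ts.
have := char_indep_mx hchar (M := fun j => rho s *m A j - char_val (c j) s *: A j) (fun t tt => rhoM' ts tt) j0.
rewrite sumrB => /eqP; rewrite subr_eq0 => /eqP e.
rewrite /Bm mulmx_sumr e scaler_sumr; apply: eq_bigr => j hj.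
by rewrite (char_val_ceq _ hj).
Qed.

Definition Nc j := #|[pred j' | ceq c j' j]|.

Lemma Nc_gt0 j : (0 < Nc j)%N.
Proof. by apply/card_gt0P; exists j; rewrite inE ceq_refl. Qed.

Lemma Nc_ceq j j' : ceq c j j' -> Nc j = Nc j'.
Proof.
move=> h; apply: eq_card => i; rewrite !inE.
apply/idP/idP => hi; first exact: ceq_trans hi h.
by apply: ceq_trans hi _; rewrite ceq_sym.
Qed.

Lemma Nc_neq0 j : ((Nc j)%:R : K) != 0.
Proof. by rewrite (proj1 (pcharf0P K) hchar) -lt0n Nc_gt0. Qed.

Lemma sumA : \sum_j A j = 1%:M.
Proof.
rewrite -(proj1 hrep) /rep_mx; apply: eq_bigr => j _.
by rewrite /char_val big1 ?scale1r // => k _; rewrite exp1rz.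
Qed.

Lemma sumB : \sum_j (Nc j)%:R^-1 *: Bm j = 1%:M.
Proof.
rewrite -sumA.
transitivity (\sum_j \sum_j' (if ceq c j' j then (Nc j)%:R^-1 *: A j' else 0)).
  apply: eq_bigr => j _; rewrite /Bm scaler_sumr big_mkcond /=; apply: eq_bigr => j' _.
  by case: ifP => //; rewrite scaler0.
rewrite exchange_big /=; apply: eq_bigr => j' _.
rewrite -big_mkcond /=.
rewrite (eq_bigr (fun _ => (Nc j')%:R^-1 *: A j')); last first.
  by move=> j hj; rewrite (Nc_ceq hj).
rewrite sumr_const -scaler_nat scalerA.
have -> : #|[pred j | ceq c j' j]| = Nc j'.
  apply: eq_card => i; rewrite !inE; exact: ceq_sym.
by rewrite ?mulVf ?divff ?Nc_neq0 // scale1r.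
Qed.

Lemma rho_x_expand (x : 'cV[K]_n) t : torus_pt t ->
  rho t *m x = \sum_j ((Nc j)%:R^-1 * char_val (c j) t) *: (Bm j *m x).
Proof.
move=> tt; rewrite -{1}[x]mul1mx -sumB (mulmx_suml x) (mulmx_sumr (rho t)).
apply: eq_bigr => j _; by rewrite -scalemxAl -scalemxAr mulmxA rho_B // -scalemxAl scalerA.
Qed.

Lemma y_rho_expand (y : 'rV[K]_n) t : torus_pt t ->
  y *m rho t = \sum_j ((Nc j)%:R^-1 * char_val (c j) t) *: (y *m Bm j).
Proof.
move=> tt; rewrite -{1}[y]mulmx1 -sumB (mulmx_sumr y) (mulmx_suml (rho t)).
apply: eq_bigr => j _; by rewrite -scalemxAr -scalemxAl -mulmxA B_rho // -scalemxAr scalerA.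
Qed.

Lemma rho_x_eq (x : 'cV[K]_n) t s : torus_pt t -> torus_pt s ->
  (forall j, Bm j *m x != 0 -> char_val (c j) t = char_val (c j) s) ->
  rho t *m x = rho s *m x.
Proof.
move=> tt ts h; rewrite !rho_x_expand //; apply: eq_bigr => j _.
case: (eqVneq (Bm j *m x) 0) => [->|hj]; first by rewrite !scaler0.
by rewrite h.
Qed.

Lemma y_rho_eq (y : 'rV[K]_n) t s : torus_pt t -> torus_pt s ->
  (forall j, y *m Bm j != 0 -> char_val (c j) t = char_val (c j) s) ->
  y *m rho t = y *m rho s.
Proof.
move=> tt ts h; rewrite !y_rho_expand //; apply: eq_bigr => j _.
case: (eqVneq (y *m Bm j) 0) => [->|hj]; first by rewrite !scaler0.
by rewrite h.
Qed.

End Rep.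


Section Closure.
Variable K : fieldType.

Lemma closure_rel r NN N (O : ('I_NN -> K) -> Prop) (u : 'I_NN -> K) (P : pred 'I_N)
  (w : 'I_N -> 'I_r -> int) (Lf : 'I_N -> {mpoly K[NN]}) (b cv : 'I_N -> K) :
  (forall p : {mpoly K[NN]}, (forall u', O u' -> p.@[u'] = 0) -> p.@[u] = 0) ->
  (forall u', O u' -> exists t, torus_pt t /\
       forall i, P i -> (Lf i).@[u'] = char_val (w i) t * b i) ->
  (forall i, P i -> b i != 0) ->
  (forall i, P i -> (Lf i).@[u] = cv i * b i) ->
  forall mp mn : 'I_N -> nat, (forall i, ~~ P i -> mp i = 0%N /\ mn i = 0%N) ->
     (forall k, \sum_i (mp i)%:Z * w i k = \sum_i (mn i)%:Z * w i k) ->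
     \prod_i cv i ^+ mp i = \prod_i cv i ^+ mn i.
Proof.
move=> hcl horb hb hu mp mn hsupp hsum.
pose G (mu : 'I_N -> nat) := \prod_i (Lf i) ^+ mu i.
pose bb (mu : 'I_N -> nat) := \prod_i b i ^+ mu i.
have Gev : forall (mu : 'I_N -> nat) u' f, (forall i, ~~ P i -> mu i = 0%N) ->
    (forall i, P i -> (Lf i).@[u'] = f i * b i) ->
    (G mu).@[u'] = \prod_i f i ^+ mu i * bb mu.
  move=> mu u' f hmu hf; rewrite /G /bb rmorph_prod -big_split /=.
  apply: eq_bigr => i _; rewrite rmorphXn /=.
  case Pi: (P i); first by rewrite hf // exprMn.
  by rewrite hmu ?Pi // !expr0 mulr1.
have hmp : forall i, ~~ P i -> mp i = 0%N by move=> i /hsupp [].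
have hmn : forall i, ~~ P i -> mn i = 0%N by move=> i /hsupp [].
have bbn0 : forall mu : 'I_N -> nat, (forall i, ~~ P i -> mu i = 0%N) -> bb mu != 0.
  move=> mu hmu; apply/prodf_neq0 => i _.
  case Pi: (P i); first by apply: expf_neq0; apply: hb.
  by rewrite hmu ?Pi // expr0 oner_neq0.
pose F := G mp * (bb mn)%:MP - G mn * (bb mp)%:MP.
have F0 : F.@[u] = 0.
  apply: hcl => u' /horb [t [tt ht]].
  rewrite /F mevalB !mevalM !mevalC (Gev _ _ _ hmp ht) (Gev _ _ _ hmn ht).
  have e : \prod_i char_val (w i) t ^+ mp i = \prod_i char_val (w i) t ^+ mn i.
    rewrite -!(char_val_sum predT) //; apply: char_val_ext => k; exact: hsum.
  by rewrite e -mulrA [bb mp * _]mulrC mulrA subrr.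
move: F0; rewrite /F mevalB !mevalM !mevalC (Gev _ _ _ hmp hu) (Gev _ _ _ hmn hu).
move/eqP; rewrite subr_eq0 -!mulrA [bb mp * _]mulrC => /eqP.
move/(mulIf (mulf_neq0 (bbn0 _ hmn) (bbn0 _ hmp))).
done.
Qed.

End Closure.

Unset Implicit Arguments.

Theorem lemma3p9 (K : closedFieldType) (hchar : [pchar K] =i pred0)
  (r m n : nat) (c : 'I_m -> 'I_r -> int) (A : 'I_m -> 'M[K]_n)
  (hrep : is_rational_rep c A)
  (x : 'cV[K]_n) (y : 'rV[K]_n)
  (hmu : forall xi : 'I_r -> K, moment_map c A x y xi = 0)
  (hx : zariski_closed (orbit_V c A x))
  (hy : zariski_closed (orbit_Vdual c A y)) :
  zariski_closed (orbit_VVdual c A x y).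
Proof.
have [Px hPx] := hx.
have [Py hPy] := hy.
set O := orbit_VVdual c A x y.
exists (fun p => forall u', O u' -> p.@[u'] = 0) => u; split.
  by move=> Ou p Pp; apply: Pp.
move=> Hcl.
pose tinv (t : 'I_r -> K) := fun k => (t k)^-1.
have tinv_torus : forall t, torus_pt t -> torus_pt (tinv t).
  by move=> t ht k; rewrite /tinv invr_eq0.
have Sv : orbit_V c A x (fun i => u (lshift n i)).
  apply/hPx => p Pp.
  pose q := p \mPo [tuple 'X_(lshift n i) | i < n].
  have qe : forall u', q.@[u'] = p.@[fun i => u' (lshift n i)].
    by move=> u'; rewrite comp_mpoly_meval; apply: meval_eq => i; rewrite tnth_mktuple mevalXU.
  rewrite -qe; apply: Hcl => u' [t [tt [h1 h2]]]; rewrite qe.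
  by apply: (proj1 (hPx _)) => //; exists t.
have [s [ts hs]] := Sv.
have Sw : orbit_Vdual c A y (fun i => u (rshift n i)).
  apply/hPy => p Pp.
  pose q := p \mPo [tuple 'X_(rshift n i) | i < n].
  have qe : forall u', q.@[u'] = p.@[fun i => u' (rshift n i)].
    by move=> u'; rewrite comp_mpoly_meval; apply: meval_eq => i; rewrite tnth_mktuple mevalXU.
  rewrite -qe; apply: Hcl => u' [t [tt [h1 h2]]]; rewrite qe.
  by apply: (proj1 (hPy _)) => //; exists t.
have [s' [ts' hs']] := Sw.
pose P (i : 'I_(m + m)) := match split i with
  | inl j => Bm c A j *m x != 0 | inr j => y *m Bm c A j != 0 end.
pose w (i : 'I_(m + m)) : 'I_r -> int := match split i with
  | inl j => c j | inr j => fun k => - c j k end.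
pose cv (i : 'I_(m + m)) := match split i with
  | inl j => char_val (c j) s | inr j => char_val (c j) (tinv s') end.
have hex : forall i, exists pb : {mpoly K[n + n]} * K, [/\ P i -> pb.2 != 0,
   (forall u' t, torus_pt t -> (forall k, u' (lshift n k) = (rep_mx c A t *m x) k 0) ->
       (forall k, u' (rshift n k) = (y *m rep_mx c A (tinv t)) 0 k) -> P i ->
       pb.1.@[u'] = char_val (w i) t * pb.2) &
   (P i -> pb.1.@[u] = cv i * pb.2)].
  move=> i; rewrite /P /w /cv; case: (split i) => j.
  - case: (pickP (fun i0 => (Bm c A j *m x) i0 0 != 0)) => [i0 hi0|none]; last first.
      have Bx0 : Bm c A j *m x = 0.
        apply/matrixP => a b.
        by move: (none a); rewrite (ord1 b) => /negbFE/eqP ->; rewrite mxE.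
      by exists (0, 1); rewrite Bx0 eqxx; split.
    pose L : {mpoly K[n + n]} := \sum_k (Bm c A j) i0 k *: 'X_(lshift n k).
    have Lv : forall u' t, torus_pt t -> (forall k, u' (lshift n k) = (rep_mx c A t *m x) k 0) ->
        L.@[u'] = char_val (c j) t * (Bm c A j *m x) i0 0.
      move=> u' t tt h; rewrite /L raddf_sum /=.
      transitivity ((Bm c A j *m (rep_mx c A t *m x)) i0 0).
        by rewrite mxE; apply: eq_bigr => k _; rewrite mevalZ mevalXU h.
      by rewrite mulmxA (B_rho hchar hrep) // -scalemxAl mxE.
    exists (L, (Bm c A j *m x) i0 0); split => //= [u' t tt h1 h2 _|_].
      exact: Lv.
    exact: Lv s ts hs.
  - case: (pickP (fun k0 => (y *m Bm c A j) 0 k0 != 0)) => [k0 hk0|none]; last first.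
      have yB0 : y *m Bm c A j = 0.
        apply/matrixP => a b.
        by move: (none b); rewrite (ord1 a) => /negbFE/eqP ->; rewrite mxE.
      by exists (0, 1); rewrite yB0 eqxx; split.
    pose L : {mpoly K[n + n]} := \sum_k (Bm c A j) k k0 *: 'X_(rshift n k).
    have Lv : forall u' t, torus_pt t ->
        (forall k, u' (rshift n k) = (y *m rep_mx c A (tinv t)) 0 k) ->
        L.@[u'] = char_val (c j) (tinv t) * (y *m Bm c A j) 0 k0.
      move=> u' t tt h; rewrite /L raddf_sum /=.
      transitivity ((y *m rep_mx c A (tinv t) *m Bm c A j) 0 k0).
        by rewrite mxE; apply: eq_bigr => k _; rewrite mevalZ mevalXU h mulrC.
      rewrite -mulmxA (rho_B hchar hrep); last exact: tinv_torus. by rewrite -(scalemxAr _ y) mxE.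
    exists (L, (y *m Bm c A j) 0 k0); split => //= [u' t tt h1 h2 _|_].
      by rewrite (Lv u' t tt h2) char_valN.
    exact: Lv s' ts' hs'.
have [f hf] := fin_all_exists hex.
have hrel := @closure_rel K r (n + n) (m + m) O u P w (fun i => (f i).1) (fun i => (f i).2) cv Hcl.
have hrel' := hrel ltac:(move=> u' [t [tt [h1 h2]]]; exists t; split => // i Pi;
      by case: (hf i) => _ H _; apply: H)
   ltac:(by move=> i Pi; case: (hf i) => H _ _; apply: H)
   ltac:(by move=> i Pi; case: (hf i) => _ _ H; apply: H).
have hcv : forall i, P i -> cv i != 0.
  move=> i; rewrite /cv; case: (split i) => j _; apply: char_val_neq0 => //.
  exact: tinv_torus.
have [t [tt ht]] := solve_gen hcv hrel'.
exists t; split => //; split => k.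
- rewrite hs.
  suff -> : rep_mx c A t *m x = rep_mx c A s *m x by [].
  apply: (rho_x_eq hchar hrep) => // j hj.
  have e : split (lshift m j) = inl j := unsplitK (inl j).
  by have := ht (lshift m j); rewrite /P /w /cv e => /(_ hj).
- rewrite hs'.
  suff -> : y *m rep_mx c A (tinv t) = y *m rep_mx c A (tinv s') by [].
  apply: (y_rho_eq hchar hrep); try exact: tinv_torus.
  move=> j hj.
  have e : split (rshift m j) = inr j := unsplitK (inr j).
  by have := ht (rshift m j); rewrite /P /w /cv e => /(_ hj); rewrite char_valN.
Qed.
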